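(* Let $n=2^s m$ with $s\in\mathbb{Z}_{\ge0}$ and $m$ odd. There is a polynomial $P$ in $s+1$ variables with zero constant term, depending only on $s$, such that for every multiset $S$ of $n$ complex numbers, $M_1(T_s)=P\big(M_{1}(S),M_{2}(S),M_{4}(S),\dots,M_{2^s}(S)\big)$, where $T_0=S$ and $T_j=(T_{j-1})_\times$ for $j\in[s]$.
   Context: For a finite multiset $T=\{u_1,\dots,u_N\}$ of complex numbers (indexed with repetitions) and $p\in\mathbb{N}$, $M_p(T)=\sum_{k=1}^N u_k^p$, and $T_\times$ is the multiset $\{u_ju_k: 1\le j<k\le N\}$ (of size $\binom{N}{2}$). *)

(* Defs.v *)
From HB Require Import structures.
From mathcomp Require Import all_boot all_order all_algebra.
From mathcomp Require Import complex.
From mathcomp Require Import Rstruct.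
From mathcomp Require Import mpoly.

Set Implicit Arguments.
Unset Strict Implicit.
Unset Printing Implicit Defensive.
Import Order.TTheory GRing.Theory Num.Theory.
Local Open Scope ring_scope.

Definition C : Type := complex Rdefinitions.R.

Definition Mp (p : nat) (T : seq C) : C := \sum_(u <- T) u ^+ p.

(* T_x = { u_j u_k : 1 <= j < k <= N } for T = [u_1; ...; u_N]. *)
Fixpoint pairprod (T : seq C) : seq C :=
  match T with
  | [::] => [::]
  | x :: T' => [seq x * y | y <- T'] ++ pairprod T'
  end.

Definition Titer (j : nat) (S : seq C) : seq C := iter j pairprod S.

(* Main.v *)
Require Import Defs.
From HB Require Import structures.
From mathcomp Require Import all_boot all_order all_algebra.
From mathcomp Require Import complex Rstruct mpoly.
From mathcomp Require Import ring.
Local Open Scope ring_scope.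
Import GRing.Theory Num.Theory.

Lemma Mp_pairprod (p : nat) (T : seq C) :
  Mp p (pairprod T) * 2 = Mp p T ^+ 2 - Mp (p * 2) T.
Proof.
rewrite /Mp; elim: T => [|x T IH] /=; first by rewrite !big_nil mul0r expr0n subr0.
rewrite big_cat /= !big_cons big_map mulrDl IH.
have -> : \sum_(j <- T) (x * j) ^+ p = x ^+ p * \sum_(j <- T) j ^+ p.
  by rewrite big_distrr /=; apply: eq_bigr => y _; rewrite exprMn.
have -> : \sum_(j <- T) j ^+ (p * 2) = \sum_(j <- T) (j ^+ p) ^+ 2.
  by apply: eq_bigr => y _; rewrite exprM.
rewrite exprM; ring.
Qed.

Lemma two_neq0 : (2 : C) != 0.
Proof. by rewrite pnatr_eq0. Qed.

Fixpoint Q (s j k : nat) : {mpoly C[s.+1]} :=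
  match j with
  | 0 => 'X_(inord k)
  | j'.+1 => 2^-1 *: (Q s j' k ^+ 2 - Q s j' k.+1)
  end.

Lemma Q_eval (s : nat) (S : seq C) j k : (k + j <= s)%N ->
  (Q s j k).@[fun i : 'I_s.+1 => Mp (2 ^ i) S] = Mp (2 ^ k) (Titer j S).
Proof.
elim: j k => [|j IH] k hk /=.
  by rewrite mevalXU inordK // ltnS -(addn0 k).
rewrite mevalZ mevalB mevalM (IH k) ?(IH k.+1);
  try (by apply: leq_trans hk; rewrite leq_add2l); try (by rewrite addSn -addnS).

apply: (mulIf two_neq0); rewrite Mp_pairprod -expnSr.
by rewrite mulrAC mulVf ?two_neq0 // mul1r expr2.
Qed.

Lemma Q_const (s j k : nat) : (Q s j k)@_0%MM = 0.
Proof.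
elim: j k => [|j IH] k /=.
  rewrite mcoeffX; case: eqP => // /(congr1 (fun m : 'X_{1.. s.+1} => m (inord k))).
  by rewrite mnm1E eqxx mnm0E.
by rewrite mcoeffZ mcoeffB -[X in X - _]/(mcoeff 0%MM _) rmorphXn /= !IH expr0n /= subr0 mulr0.
Qed.

Theorem lemma3p5 (s : nat) :
  exists P : {mpoly C[s.+1]},
    P@_0%MM = 0 /\
    forall (m : nat) (S : seq C),
      odd m -> size S = (2 ^ s * m)%N ->
      Mp 1 (Titer s S) = P.@[fun i : 'I_s.+1 => Mp (2 ^ i) S].
Proof.
exists (Q s s 0); split; first exact: Q_const.
by move=> m S _ _; rewrite Q_eval.
Qed.
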